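(* Let $n\ge 3$ and $\varphi$ a linear functional with $\varphi(e_i)=a_i$, $0<a_1<\dots<a_n$. The flip graph of $\varphi$-monotone paths on $\diamond^n$ has diameter $2(n-1)$.
   Context: $\diamond^n=\mathrm{conv}\{\pm e_1,\dots,\pm e_n\}$. A monotone path is a sequence of vertices $-e_n=v_0,\dots,v_m=e_n$ with $v_{j-1}\neq -v_j$ and $\varphi(v_{j-1})<\varphi(v_j)$. The flip graph has the monotone paths as vertices, two paths being adjacent when they differ by a polygon flip across a 2-face; since the 2-faces of $\diamond^n$ ($n\ge3$) are triangles, this means one path is obtained from the other by inserting or deleting a single vertex. *)

(* Defs.v *)
From mathcomp Require Import all_boot all_order all_algebra.
Set Implicit Arguments. Unset Strict Implicit. Unset Printing Implicit Defensive.
Import Order.TTheory GRing.Theory Num.Theory.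
Local Open Scope ring_scope.

(* Vertices of the cross-polytope conv{±e_1,...,±e_n}: a vertex is (b, i)
   with (true, i) = +e_(i+1) and (false, i) = -e_(i+1) (0-based index i). *)
Definition cvert (n : nat) : Type := (bool * 'I_n)%type.

Definition opp_v (n : nat) (v : cvert n) : cvert n := (~~ v.1, v.2).

Definition phi (R : numDomainType) (n : nat) (a : 'I_n -> R) (v : cvert n) : R :=
  if v.1 then a v.2 else - a v.2.

Definition mstep (R : numDomainType) (n : nat) (a : 'I_n -> R) (u v : cvert n) : bool :=
  (phi a u < phi a v) && (u != opp_v v).

Definition is_en (n : nat) (b : bool) (v : cvert n) : bool :=
  (v.1 == b) && (val v.2 == n.-1)%N.

Definition cp_mono_path (R : numDomainType) (n : nat) (a : 'I_n -> R)
  (p : seq (cvert n)) : Prop :=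
  match p with
  | [::] => False
  | v0 :: p' => [/\ is_en false v0, is_en true (last v0 p') & path (mstep a) v0 p']
  end.

Definition insert1 (n : nat) (p q : seq (cvert n)) : Prop :=
  exists (i : nat) (x : cvert n), q = take i p ++ x :: drop i p.

(* adjacency in the flip graph (triangle flips = insertion/deletion of one vertex) *)
Definition flip_adj (n : nat) (p q : seq (cvert n)) : Prop :=
  insert1 p q \/ insert1 q p.

(* a walk p = s_0, s_1, ..., s_k = q in the flip graph (all s_j monotone
   paths); its length is k = size s *)
Fixpoint flip_walk_from (R : numDomainType) (n : nat) (a : 'I_n -> R)
  (p : seq (cvert n)) (s : seq (seq (cvert n))) (q : seq (cvert n)) : Prop :=
  match s with
  | [::] => p = q
  | p1 :: s' => [/\ cp_mono_path a p1, flip_adj p p1 & flip_walk_from a p1 s' q]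
  end.

Definition flip_walk (R : numDomainType) (n : nat) (a : 'I_n -> R)
  (p : seq (cvert n)) (s : seq (seq (cvert n))) (q : seq (cvert n)) : Prop :=
  cp_mono_path a p /\ flip_walk_from a p s q.

(* Main.v *)
Require Import Defs.
From mathcomp Require Import all_boot all_order all_algebra.
From mathcomp Require Import zify.
Import Order.TTheory GRing.Theory Num.Theory.
Local Open Scope ring_scope.
Set Implicit Arguments. Unset Strict Implicit.

Section S.
Variables (R : realFieldType) (k : nat) (a : 'I_k.+3 -> R).
Hypothesis apos : forall i, 0 < a i.
Hypothesis amono : forall i j : 'I_k.+3, (i < j)%N -> a i < a j.
Local Notation n := k.+3.
Local Notation V := (bool * 'I_k.+3)%type.

Definition ltp : rel V := fun u v => phi a u < phi a v.

Lemma a_le (i j : 'I_n) : (i <= j)%N -> a i <= a j.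
Proof.
rewrite leq_eqVlt => /orP[/eqP/val_inj -> //|/amono/ltW //].
Qed.

Lemma a_ltE (i j : 'I_n) : (a i < a j) = (i < j)%N.
Proof.
case: (ltnP i j) => [/amono -> //|/a_le h]; apply/negbTE; rewrite -leNgt //.
Qed.

Lemma ltp_trans : transitive ltp.
Proof. move=> y x z; rewrite /ltp; exact: lt_trans. Qed.

Lemma ltp_irr : irreflexive ltp.
Proof. by move=> x; rewrite /ltp ltxx. Qed.

Lemma phiE (b : bool) (i : 'I_n) : phi a (b, i) = if b then a i else - a i.
Proof. by []. Qed.

Lemma phi_min (v : V) : phi a (false, ord_max) <= phi a v.
Proof.
case: v => [[] i]; rewrite !phiE.
  apply: (le_trans (y := 0)); last exact: ltW.
  by rewrite oppr_le0 ltW.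
by rewrite lerN2 a_le // -ltnS.
Qed.

Lemma phi_max (v : V) : phi a v <= phi a (true, ord_max).
Proof.
case: v => [[] i]; rewrite !phiE.
  by rewrite a_le // -ltnS.
apply: (le_trans (y := 0)); last exact: ltW.
by rewrite oppr_le0 ltW.
Qed.

Definition L : seq V :=
  [seq (false, i) | i <- rev (enum 'I_n)] ++ [seq (true, i) | i <- enum 'I_n].

Lemma enum_pairwise : pairwise (fun i j : 'I_n => (i < j)%N) (enum 'I_n).
Proof.
have := iota_ltn_sorted 0 n; rewrite -val_enum_ord.
by rewrite (sorted_pairwise ltn_trans) pairwise_map.
Qed.

Lemma L_sorted : sorted ltp L.
Proof.
rewrite (sorted_pairwise ltp_trans) pairwise_cat; apply/and3P; split.
- apply/allrelP => u v /mapP[i _ ->] /mapP[j _ ->].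
  rewrite /ltp !phiE; apply: (lt_trans (y := 0)) => //.
  by rewrite oppr_lt0.
- rewrite -(sorted_pairwise ltp_trans) sorted_map rev_sorted.
  apply: (sub_sorted _ (pairwise_sorted enum_pairwise)).
  by move=> i j /= h; rewrite /ltp !phiE ltrN2 a_ltE.
- rewrite pairwise_map; apply: (sub_pairwise _ enum_pairwise).
  by move=> i j /= h; rewrite /ltp !phiE a_ltE.
Qed.

Lemma mem_L (v : V) : v \in L.
Proof.
case: v => [[] i]; rewrite mem_cat; apply/orP; [right|left];
  apply/mapP; exists i => //; by rewrite ?mem_rev mem_enum.
Qed.

Lemma L_uniq : uniq L.
Proof. exact: (sorted_uniq ltp_trans ltp_irr L_sorted). Qed.


Definition seqof (A : {set V}) : seq V := [seq x <- L | x \in A].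

Lemma seqof_sorted (A : {set V}) : sorted ltp (seqof A).
Proof. exact: (sorted_filter ltp_trans _ L_sorted). Qed.

Lemma mem_seqof (A : {set V}) (x : V) : (x \in seqof A) = (x \in A).
Proof. by rewrite mem_filter mem_L andbT. Qed.

Lemma seqof_ins (A : {set V}) (x : V) : x \notin A -> insert1 (seqof A) (seqof (x |: A)).
Proof.
move=> xA; rewrite /insert1 /seqof.
have := L_uniq; have := mem_L x.
move: L => L0 /splitPr [L1 L2].
rewrite cat_uniq /= => /and4P[_ hh xL2 _].
have xL1 : x \notin L1.
  by apply: contra hh => xL1; rewrite /= xL1.
have e1 : [seq y <- L1 | y \in x |: A] = [seq y <- L1 | y \in A].
  apply: eq_in_filter => y yL1; rewrite in_setU1.
  case: eqP => // eyx; move: xL1; by rewrite -eyx yL1.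
have e2 : [seq y <- L2 | y \in x |: A] = [seq y <- L2 | y \in A].
  apply: eq_in_filter => y yL2; rewrite in_setU1.
  case: eqP => // eyx; move: xL2; by rewrite -eyx yL2.
exists (size [seq y <- L1 | y \in A]), x.
rewrite !filter_cat /= setU11 (negbTE xA) e1 e2.
by rewrite take_size_cat // drop_size_cat.
Qed.

Definition toggle (x : V) (A : {set V}) := if x \in A then A :\ x else x |: A.

Lemma seqof_step (A : {set V}) (x : V) : flip_adj (seqof A) (seqof (toggle x A)).
Proof.
rewrite /toggle; case: ifP => xA.
  right; rewrite -{2}(setD1K xA); apply: seqof_ins; by rewrite setD11.
left; apply: seqof_ins; by rewrite xA.
Qed.

Lemma mstep_ltp (u v : V) : mstep a u v -> ltp u v.
Proof. by case/andP. Qed.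

Lemma path_suff (x : V) s : pairwise ltp (x :: s) ->
  (forall i : 'I_n, (false, i) \in x :: s -> (true, i) \in x :: s ->
     exists2 w, w \in x :: s & (phi a (false, i) < phi a w < phi a (true, i))) ->
  path (mstep a) x s.
Proof.
elim: s x => [//|y s IH] x /= /andP[/andP[xy xs] pw] H.
apply/andP; split.
  apply/andP; split => //; apply/negP => /eqP exy.
  move: y exy xy xs pw H => [b i] -> /=.
  case: b => /=; last first.
    rewrite /ltp !phiE /= => h; have := lt_trans (apos i) h; rewrite oppr_gt0 => h2.
    by move: (lt_trans h2 (apos i)); rewrite ltxx.
  move=> _ xs pw H.
  have [w]:= H i (mem_head _ _) (ltac:(by rewrite !inE eqxx orbT)).
  rewrite !inE => /or3P[/eqP->|/eqP->|ws]; rewrite ?ltxx ?andbF //.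
  move/andP=> [_ h]; move: pw => /= /andP[/allP /(_ w ws)].
  by rewrite /ltp => /(lt_trans h); rewrite ltxx.
apply: IH => // i fi ti.
have [w]:= H i (ltac:(by rewrite inE fi orbT)) (ltac:(by rewrite inE ti orbT)).
rewrite inE => /orP[/eqP->|wys hw]; last by exists w.
move: fi; rewrite inE => /orP[/eqP efy|fs].
  move=> /andP[h2 _]; move: xy; rewrite /ltp -efy => h1.
  by move: (lt_trans h1 h2); rewrite ltxx.
move: xs => /allP /(_ _ fs) h1 /andP[h2 _].
by move: (lt_trans h1 h2); rewrite /ltp ltxx.
Qed.

Lemma path_ltp (x : V) s : path (mstep a) x s -> path ltp x s.
Proof. apply: sub_path => u v; exact: mstep_ltp. Qed.

Lemma path_nec (x : V) s (u v : V) : path (mstep a) x s -> u \in x :: s -> v \in x :: s ->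
  ltp u v -> (forall w, w \in x :: s -> ~~ (ltp u w && ltp w v)) -> mstep a u v.
Proof.
elim: s x => [|y s IH] x.
  by rewrite !inE => _ /eqP-> /eqP->; rewrite ltp_irr.
move=> /= /andP[mxy ps] uin vin uv H.
have xmin : all (ltp x) (y :: s).
  by apply: (order_path_min ltp_trans); apply: path_ltp; rewrite /= mxy.
move: uin; rewrite inE => /orP[/eqP eu|uys].
  subst u; move: vin; rewrite !inE => /or3P[/eqP ev|/eqP ev|vs].
  - by move: uv; rewrite ev ltp_irr.
  - by rewrite ev.
  - have := H y (ltac:(by rewrite !inE eqxx orbT)).
    rewrite (mstep_ltp mxy) /=.
    have := order_path_min ltp_trans (path_ltp ps).
    by move=> /allP /(_ _ vs) ->.
move: vin; rewrite inE => /orP[/eqP ev|vys].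
  subst v; move: xmin => /allP /(_ _ uys) h.
  by move: (ltp_trans h uv); rewrite ltp_irr.
apply: (IH y) => // w wys; apply: H; by rewrite inE wys orbT.
Qed.


Definition good (m : 'I_n) (A : {set V}) : Prop :=
  [/\ (false, ord_max) \in A, (true, ord_max) \in A,
      ((false, m) \in A) != ((true, m) \in A) &
      forall x : V, x \in A -> (m <= x.2)%N].

Lemma pw_last (v0 : V) s u : pairwise ltp (v0 :: s) -> u \in v0 :: s ->
  u = last v0 s \/ ltp u (last v0 s).
Proof.
elim: s v0 => [|y s IH] v0 /=.
  by rewrite inE => _ /eqP ->; left.
move=> /andP[/andP[h1 h2] pw]; rewrite inE => /orP[/eqP ->|uin].
  right; have : last y s \in y :: s by apply: mem_last.
  rewrite inE => /orP[/eqP -> //|ls]; by move: h2 => /allP /(_ _ ls).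
exact: IH.
Qed.

Lemma is_enP b (v : V) : is_en b v -> v = (b, ord_max).
Proof.
case: v => [c i] /andP[/eqP /= -> /eqP hi]; congr pair; apply: val_inj; exact: hi.
Qed.

Lemma good_mono m A : good m A -> cp_mono_path a (seqof A).
Proof.
case=> fA tA ex mn.
have sp := seqof_sorted A; rewrite (sorted_pairwise ltp_trans) in sp.
case E: (seqof A) => [|v0 s].
  by move: fA; rewrite -mem_seqof E.
rewrite E in sp.
have f_in : (false, ord_max) \in v0 :: s by rewrite -E mem_seqof.
have t_in : (true, ord_max) \in v0 :: s by rewrite -E mem_seqof.
split.
- have -> : v0 = (false, ord_max).
    move: f_in; rewrite inE => /orP[/eqP -> //|fs].
    move: sp => /= /andP[/allP /(_ _ fs) h _].
    by move: (lt_le_trans h (phi_min v0)); rewrite ltxx.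
  by rewrite /is_en /= eqxx.
- have -> : last v0 s = (true, ord_max).
    case: (pw_last sp t_in) => [<- //|h].
    by move: (lt_le_trans h (phi_max _)); rewrite ltxx.
  by rewrite /is_en /= eqxx.
- apply: path_suff => // i fi ti.
  rewrite -E !mem_seqof in fi ti.
  have mi := mn _ fi.
  have mi' : (m : nat) != i.
    apply/negP => /eqP /val_inj emi; move: ex; by rewrite emi fi ti.
  have lt : (m < i)%N by rewrite ltn_neqAle mi' mi.
  exists ((true, m) \in A, m).
    rewrite -E mem_seqof; case tm: ((true, m) \in A) => //.
    by move: ex; rewrite tm; case: ((false, m) \in A).
  rewrite !phiE; case: ((true, m) \in A); apply/andP; split.
  + apply: (lt_trans (y := 0)); by rewrite ?oppr_lt0.
  + by rewrite a_ltE.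
  + by rewrite ltrN2 a_ltE.
  + apply: (lt_trans (y := 0)); by rewrite ?oppr_lt0.
Qed.

Lemma mono_good p : cp_mono_path a p ->
  p = seqof [set x in p] /\ exists m, good m [set x in p].
Proof.
case: p => [//|v0 s] [e0 el ps].
have sp : sorted ltp (v0 :: s) := path_ltp ps.
split.
  apply: (irr_sorted_eq ltp_trans ltp_irr sp (seqof_sorted _)) => x.
  by rewrite mem_seqof in_set.
pose P j := has (fun x : V => val x.2 == j) (v0 :: s).
have exP : exists j, P j by exists (val v0.2); rewrite /P /= eqxx.
case: (ex_minnP exP) => m0 /hasP[[b i] xp /= /eqP xm] minm.
have mn : forall y : V, y \in v0 :: s -> (m0 <= y.2)%N.
  by move=> y yp; apply: minm; apply/hasP; exists y.
have notboth : ~~ (((false, i) \in v0 :: s) && ((true, i) \in v0 :: s)).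
  apply/negP => /andP[fin tin].
  have hlt : ltp (false, i) (true, i).
    rewrite /ltp !phiE; apply: (lt_trans (y := 0)); by rewrite ?oppr_lt0.
  have H := path_nec ps fin tin hlt.
  have : mstep a (false, i) (true, i).
    apply: H => w win; apply/negP => /andP[h1 h2].
    have := mn w win; rewrite -xm.
    move: h1 h2; case: w win => [[] j] _; rewrite /ltp !phiE => h1 h2 /=.
      by rewrite leqNgt -a_ltE h2.
    by rewrite leqNgt -a_ltE -ltrN2 h1.
  by rewrite /mstep /opp_v /= eqxx andbF.
exists i; split.
- by rewrite in_set -(is_enP e0) mem_head.
- by rewrite in_set -(is_enP el) mem_last.
- rewrite !in_set; case: b xp => xp; rewrite xp.
    by move: notboth; rewrite xp andbT => /negbTE ->.
  by move: notboth; rewrite xp /= => /negbTE ->.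
- by move=> y; rewrite in_set => /mn; rewrite xm.
Qed.


Lemma walk_cat p s q t r : flip_walk_from a p s q -> flip_walk_from a q t r ->
  flip_walk_from a p (s ++ t) r.
Proof.
elim: s p => [|p1 s IH] p /=; first by move=> ->.
by case=> h1 h2 h3 h4; split => //; apply: IH.
Qed.

Lemma adj_sym (p q : seq V) : flip_adj p q -> flip_adj q p.
Proof. by case; [right|left]. Qed.

Lemma walk_rev p s q : flip_walk a p s q ->
  exists s', flip_walk a q s' p /\ size s' = size s.
Proof.
elim: s p => [|p1 s IH] p [cp w] /=.
  by exists [::]; move: w => /= <-; split.
case: w => cp1 adj w.
have [s' [[cq w'] sz]] := IH p1 (conj cp1 w).
exists (s' ++ [:: p]); split; last by rewrite size_cat sz addn1.
split => //; apply: (walk_cat w'); split => //; exact: adj_sym.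
Qed.

Lemma in_toggle (x y : V) (A : {set V}) :
  (x \in toggle y A) = (if x == y then y \notin A else x \in A).
Proof.
rewrite /toggle; case: ifP => yA; rewrite !inE; case: eqP => // ->; by rewrite yA.
Qed.

Lemma good_toggle m A (y : V) : good m A -> (m < y.2)%N ->
  y != (false, ord_max) -> y != (true, ord_max) -> good m (toggle y A).
Proof.
case=> fA tA ex mn my yf yt; split.
- by rewrite in_toggle eq_sym (negbTE yf).
- by rewrite in_toggle eq_sym (negbTE yt).
- have ne : forall b, ((b, m) == y) = false.
    move=> b; apply/negP => /eqP eby; move: my; by rewrite -eby ltnn.
  by rewrite !in_toggle !ne.
- move=> x; rewrite in_toggle; case: eqP => [-> _|_ /mn //].
  exact: ltnW.
Qed.

Lemma step_walk m (A : {set V}) (x : V) : good m (toggle x A) ->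
  flip_walk_from a (seqof A) [:: seqof (toggle x A)] (seqof (toggle x A)).
Proof. move=> g; split => //; [exact: (good_mono g)|exact: seqof_step]. Qed.

Lemma free m (l : seq V) (A B : {set V}) : good m A -> good m B ->
  (forall x : V, (x.2 <= m)%N -> (x \in A) = (x \in B)) ->
  (forall x : V, (x \in A) != (x \in B) -> x \in l) ->
  exists s, flip_walk_from a (seqof A) s (seqof B) /\
    (size s <= count (fun x => (x \in A) != (x \in B)) l)%N.
Proof.
elim: l A => [|y l IH] A gA gB ag inl.
  exists [::]; split => //=; congr seqof; apply/setP => x.
  by apply/eqP; apply/negPn/negP => /inl.
case dy: ((y \in A) != (y \in B)); last first.
  have inl' : forall x : V, (x \in A) != (x \in B) -> x \in l.
    move=> x dx; have := inl _ dx; rewrite inE => /orP[/eqP exy|//].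
    by move: dx; rewrite exy dy.
  have [s [w sz]] := IH A gA gB ag inl'.
  by exists s; split => //=; rewrite dy.
have my : (m < y.2)%N.
  rewrite ltnNge; apply/negP => /ag ey; by move: dy; rewrite ey eqxx.
have yf : y != (false, ord_max).
  apply/negP => /eqP ey; move: dy; case: gA => fA _ _ _; case: gB => fB _ _ _.
  by rewrite ey fA fB.
have yt : y != (true, ord_max).
  apply/negP => /eqP ey; move: dy; case: gA => _ tA _ _; case: gB => _ tB _ _.
  by rewrite ey tA tB.
have gA' := good_toggle gA my yf yt.
have sub : forall x, (x \in toggle y A) != (x \in B) -> (x \in A) != (x \in B).
  move=> x; rewrite in_toggle; have [->|nxy] := eqVneq x y; last by [].
  by move: dy; case: (y \in A); case: (y \in B).
have ag' : forall x : V, (x.2 <= m)%N -> (x \in toggle y A) = (x \in B).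
  move=> x xm; rewrite in_toggle; case: eqP => [exy|_]; last exact: ag.
  by move: my; rewrite -exy ltnNge xm.
have inl' : forall x : V, (x \in toggle y A) != (x \in B) -> x \in l.
  move=> x dx; have := inl _ (sub _ dx); rewrite inE => /orP[/eqP exy|//].
  move: dx; rewrite exy in_toggle eqxx.
  by move: dy; case: (y \in A); case: (y \in B).
have [s [w sz]] := IH (toggle y A) gA' gB ag' inl'.
exists (seqof (toggle y A) :: s); split.
  split => //; [exact: (good_mono gA')|exact: seqof_step].
rewrite /= dy add1n ltnS; apply: (leq_trans sz); exact: sub_count.
Qed.


Lemma level_elem m A : good m A ->
  forall c, ((c, m) \in A) = (c == ((true, m) \in A)).
Proof.
case=> _ _ ex _ [] /=; first by case: ((true, m) \in A).
by move: ex; case: ((false, m) \in A); case: ((true, m) \in A).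
Qed.

Lemma good_lt m m' A B (x : V) : good m A -> good m' B ->
  (x \in A) != (x \in B) -> (x.2 < k.+2)%N.
Proof.
case=> fA tA _ _ [fB tB _ _]; case: x => [c i] /=.
have := ltn_ord i; rewrite ltnS leq_eqVlt => /orP[/eqP ei|//].
have -> : i = ord_max by apply: val_inj.
by case: c; rewrite ?fA ?fB ?tA ?tB.
Qed.

Definition l_ge (j : nat) : seq V :=
  [seq (false, inord i) | i <- iota j (k.+2 - j)] ++
  [seq (true, inord i) | i <- iota j (k.+2 - j)].

Lemma size_l_ge j : size (l_ge j) = (2 * (k.+2 - j))%N.
Proof. by rewrite size_cat !size_map size_iota mul2n addnn. Qed.

Lemma mem_l_ge j (x : V) : (j <= x.2)%N -> (x.2 < k.+2)%N -> x \in l_ge j.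
Proof.
case: x => [c i] /= h1 h2; rewrite mem_cat.
have hi : (i : nat) \in iota j (k.+2 - j) by rewrite mem_iota subnKC // (leq_trans h1) // ltnW.
have -> : i = inord i by rewrite inord_val.
by case: c; apply/orP; [right|left]; apply/mapP; exists (i : nat) => //; rewrite inordK.
Qed.

Lemma toggleK (x : V) (A : {set V}) : toggle x (toggle x A) = A.
Proof.
apply/setP => y; rewrite !in_toggle; case: eqP => [->|//].
by rewrite eqxx negbK.
Qed.

Lemma good_add0 m A b : good m A -> (0 < m)%N -> good ord0 (toggle (b, ord0) A).
Proof.
case=> fA tA ex mn m0.
have nA : forall c, (c, ord0) \in A = false.
  move=> c; apply/negP => /mn; by rewrite leqNgt m0.
split.
- have ne0 : (ord_max == ord0 :> 'I_n) = false by [].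
  by rewrite in_toggle xpair_eqE ne0 andbF fA.
- have ne0 : (ord_max == ord0 :> 'I_n) = false by [].
  by rewrite in_toggle xpair_eqE ne0 andbF tA.
- rewrite !in_toggle !xpair_eqE !eqxx !andbT !nA.
  by case: b.
- by [].
Qed.

Lemma case_i sA tB A B : good sA A -> good tB B -> (0 < sA)%N -> (0 < tB)%N ->
  exists s, flip_walk_from a (seqof A) s (seqof B) /\ (size s <= 2 * k.+2)%N.
Proof.
move=> gA gB sA0 tB0.
have gA' := good_add0 true gA sA0.
have gB' := good_add0 true gB tB0.
have ag : forall x : V, (x.2 <= (ord0 : 'I_n))%N -> (x \in toggle (true, ord0) A) = (x \in toggle (true, ord0) B).
  move=> [c i] /= hi.
  have nA : forall y : V, (y.2 <= 0)%N -> (y \in A) = false.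
    move=> y hy; apply/negP; case: gA => _ _ _ /(_ y) h /h.
    by rewrite leqNgt (leq_ltn_trans hy sA0).
  have nB : forall y : V, (y.2 <= 0)%N -> (y \in B) = false.
    move=> y hy; apply/negP; case: gB => _ _ _ /(_ y) h /h.
    by rewrite leqNgt (leq_ltn_trans hy tB0).
  by rewrite !in_toggle (nA (true, ord0)) // (nB (true, ord0)) // (nA (c, i)) // (nB (c, i)).
have dl : forall x : V, (x \in toggle (true, ord0) A) != (x \in toggle (true, ord0) B) -> x \in l_ge 1.
  move=> x dx; apply: mem_l_ge; last exact: (good_lt gA' gB' dx).
  rewrite lt0n; apply/negP => /eqP x0; move: dx; by rewrite ag ?eqxx // x0.
have [s [w sz]] := free gA' gB' ag dl.
exists ([:: seqof (toggle (true, ord0) A)] ++ s ++ [:: seqof B]); split.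
  apply: walk_cat; first exact: (step_walk gA').
  apply: (walk_cat w).
  have := step_walk (A := toggle (true, ord0) B) (x := (true, ord0)).
  rewrite toggleK; apply; exact: gB.
have := leq_trans sz (count_size _ _); rewrite size_l_ge => h.
rewrite !size_cat /=; lia.
Qed.


Lemma nlow m (A : {set V}) (y : V) : good m A -> (y.2 < m)%N -> (y \in A) = false.
Proof.
case=> _ _ _ mn hy; apply/negP => /mn; by rewrite leqNgt hy.
Qed.

Lemma lvl0 (A : {set V}) (x : V) : good ord0 A -> (x.2 == 0 :> nat) ->
  (x \in A) = (x == (((true, ord0) \in A), ord0)).
Proof.
move=> gA; case: x => c i /= /eqP i0.
have -> : i = ord0 by apply: val_inj.
by rewrite (level_elem gA) xpair_eqE eqxx andbT.
Qed.

Lemma case_ii A B tB : good ord0 A -> good tB B -> (0 < tB)%N ->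
  exists s, flip_walk_from a (seqof A) s (seqof B) /\ (size s <= 2 * k.+2)%N.
Proof.
move=> gA gB tB0.
set bA := (true, ord0) \in A.
set t := (bA, ord0) : V.
set A1 := [set x : V | if (x.2 == 0 :> nat) then x \in A else x \in B].
have gA1 : good ord0 A1.
  case: gA => fA tA ex _; case: gB => fB tB' _ _; split; rewrite ?in_set //=.
have ag : forall x : V, (x.2 <= (ord0 : 'I_n))%N -> (x \in A) = (x \in A1).
  by move=> x; rewrite in_set leqn0 => ->.
have dl : forall x : V, (x \in A) != (x \in A1) -> x \in l_ge 1.
  move=> x dx; apply: mem_l_ge; last exact: (good_lt gA gA1 dx).
  rewrite lt0n; apply/negP => x0; move: dx; by rewrite ag ?leqn0 // eqxx.
have [s [w sz]] := free gA gA1 ag dl.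
have eB : toggle t A1 = B.
  apply/setP => x; rewrite in_toggle in_set.
  have [->|nxt] := eqVneq x t.
    rewrite /= (lvl0 gA) //= eqxx /=.
    by rewrite (nlow gB) //.
  rewrite in_set; case: ifP => x0; last by [].
  by rewrite (lvl0 gA) // (negbTE nxt) (nlow gB) // (eqP x0).
exists (s ++ [:: seqof B]); split.
  apply: (walk_cat w); rewrite -eB; apply: (step_walk (m := tB)); by rewrite eB.
have := leq_trans sz (count_size _ _); rewrite size_l_ge => h.
rewrite !size_cat /=; lia.
Qed.


Lemma case_iv A B : good ord0 A -> good ord0 B ->
  ((true, ord0) \in A) = ((true, ord0) \in B) ->
  exists s, flip_walk_from a (seqof A) s (seqof B) /\ (size s <= 2 * k.+2)%N.
Proof.
move=> gA gB eAB.
have ag : forall x : V, (x.2 <= (ord0 : 'I_n))%N -> (x \in A) = (x \in B).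
  by move=> x; rewrite leqn0 => x0; rewrite (lvl0 gA) // (lvl0 gB) // eAB.
have dl : forall x : V, (x \in A) != (x \in B) -> x \in l_ge 1.
  move=> x dx; apply: mem_l_ge; last exact: (good_lt gA gB dx).
  rewrite lt0n; apply/negP => x0; move: dx; by rewrite ag ?leqn0 // eqxx.
have [s [w sz]] := free gA gB ag dl.
exists s; split => //.
have := leq_trans sz (count_size _ _); rewrite size_l_ge => h; lia.
Qed.

Definition o1 : 'I_n := inord 1.
Lemma o1E : (o1 : nat) = 1%N.
Proof. by rewrite /o1 inordK. Qed.

Lemma ne_lvl (x y : V) : (x.2 != y.2 :> nat) -> (x == y) = false.
Proof.
move=> h; apply/negP => /eqP exy; move: h; by rewrite exy eqxx.
Qed.

Lemma V1 A B : good ord0 A -> good ord0 B ->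
  ((true, ord0) \in A) != ((true, ord0) \in B) ->
  ((false, o1) \in A) != ((true, o1) \in A) ->
  exists s, flip_walk_from a (seqof A) s (seqof B) /\
    (size s <= 2 * k + 2 + count (fun x => (x \in A) != (x \in B)) [:: (false, o1); (true, o1)])%N.
Proof.
move=> gA gB dAB sA1.
set bA := (true, ord0) \in A; set bB := (true, ord0) \in B.
set tA := (bA, ord0) : V; set tB := (bB, ord0) : V.
set A1 := [set x : V | if (x.2 <= 1)%N then x \in A else x \in B].
have gA1 : good ord0 A1.
  case: gA => fA tA' ex _; case: gB => fB tB' _ _; split; rewrite ?in_set //=.
have ag : forall x : V, (x.2 <= (ord0 : 'I_n))%N -> (x \in A) = (x \in A1).
  by move=> x h; rewrite in_set (leq_trans h).
have dl : forall x : V, (x \in A) != (x \in A1) -> x \in l_ge 2.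
  move=> x dx; apply: mem_l_ge; last exact: (good_lt gA gA1 dx).
  rewrite ltnNge; apply/negP => x1; move: dx; by rewrite in_set x1 eqxx.
have [s1 [w1 sz1]] := free gA gA1 ag dl.
set A2 := toggle tA A1.
have A1o1 : forall c, ((c, o1) \in A1) = ((c, o1) \in A).
  by move=> c; rewrite in_set /= o1E.
have gA2 : good o1 A2.
  case: gA1 => fA1 tA1 _ _; split.
  - by rewrite in_toggle ne_lvl.
  - by rewrite in_toggle ne_lvl.
  - by rewrite !in_toggle !ne_lvl /= ?o1E // !A1o1.
  - move=> x; rewrite in_toggle o1E; have [->|nxt] := eqVneq x tA.
      by rewrite in_set /= (lvl0 gA) //= eqxx.
    rewrite in_set; case: ifP => [x1 xA|x1 _]; last by rewrite ltnW // ltnNge x1.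
    rewrite lt0n; apply/negP => /eqP x0; move: xA.
    by rewrite (lvl0 gA) ?x0 // (negbTE nxt).
set A3 := toggle tB A2.
have tBA2 : tB \in A2 = false by rewrite (nlow gA2) // o1E.
have gA3 : good ord0 A3.
  case: (gA2) => fA2 tA2 _ _; split.
  - by rewrite in_toggle ne_lvl.
  - by rewrite in_toggle ne_lvl.
  - rewrite !(in_toggle _ tB A2) tBA2 !(nlow gA2) ?o1E //= !xpair_eqE !eqxx !andbT.
    by case: (bB).
  - by [].
have ag2 : forall x : V, (x.2 <= (ord0 : 'I_n))%N -> (x \in A3) = (x \in B).
  move=> x; rewrite leqn0 => x0; rewrite in_toggle (lvl0 gB) //.
  case: eqP => _; [by rewrite tBA2|by rewrite (nlow gA2) // o1E (eqP x0)].
have A3o1 : forall c, ((c, o1) \in A3) = ((c, o1) \in A).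
  by move=> c; rewrite !in_toggle !ne_lvl /= ?o1E // A1o1.
have dl2 : forall x : V, (x \in A3) != (x \in B) ->
    x \in [:: (false, o1); (true, o1)].
  case=> c i dx.
  have i0 : (i : nat) != 0%N.
    apply/negP => /eqP i0; move: dx; by rewrite ag2 ?eqxx //= i0.
  case: (ltngtP i 1) => [|i1|i1].
  - by rewrite ltnS leqn0 (negbTE i0).
  - move: dx; rewrite !in_toggle !ne_lvl //=.
    by rewrite in_set /= leqNgt i1 eqxx.
  - have -> : i = o1 by apply/eqP; rewrite -val_eqE /= o1E i1.
    by clear dx; case: c; rewrite !inE eqxx ?orbT.
have [s2 [w2 sz2]] := free gA3 gB ag2 dl2.
exists (s1 ++ [:: seqof A2] ++ [:: seqof A3] ++ s2); split.
  apply: (walk_cat w1); apply: walk_cat; first exact: (step_walk gA2).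
  apply: walk_cat; first exact: (step_walk gA3).
  exact: w2.
move: sz2; rewrite /= !A3o1 => sz2.
have := leq_trans sz1 (count_size _ _); rewrite size_l_ge => h.
rewrite !size_cat /=; move: sz2; rewrite /=; lia.
Qed.


Lemma case_v A B : good ord0 A -> good ord0 B ->
  ((true, ord0) \in A) != ((true, ord0) \in B) ->
  exists s, flip_walk a (seqof A) s (seqof B) /\ (size s <= 2 * k.+2)%N.
Proof.
move=> gA gB dAB.
have cb : forall (A' B' : {set V}),
    (count (fun x => (x \in A') != (x \in B')) [:: (false, o1); (true, o1)] <= 2)%N.
  by move=> A' B'; apply: (leq_trans (count_size _ _)).
case sA: (((false, o1) \in A) != ((true, o1) \in A)).
  have [s [w sz]] := V1 gA gB dAB sA.
  exists s; split; first by split => //; exact: (good_mono gA).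
  have := cb A B; lia.
case sB: (((false, o1) \in B) != ((true, o1) \in B)).
  have [s [w sz]] := V1 gB gA (ltac:(by rewrite eq_sym)) sB.
  have [s' [w' sz']] := walk_rev (conj (good_mono gB) w).
  exists s'; split => //; rewrite sz'; have := cb B A; lia.
set y : V := (true, o1).
have yf : y != (false, ord_max) by apply/negP => /eqP [].
have yt : y != (true, ord_max).
  by apply/negP => /eqP [] /(congr1 (@nat_of_ord _)); rewrite o1E.
have my : ((ord0 : 'I_n) < y.2)%N by rewrite /= o1E.
have gA' := good_toggle gA my yf yt.
have dAB' : ((true, ord0) \in toggle y A) != ((true, ord0) \in B).
  rewrite in_toggle ne_lvl //=; last by rewrite o1E.
have sA' : ((false, o1) \in toggle y A) != ((true, o1) \in toggle y A).
  rewrite /y !in_toggle eqxx xpair_eqE /=.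
  by move: sA; case: ((false, o1) \in A); case: ((true, o1) \in A).
have [s [w sz]] := V1 gA' gB dAB' sA'.
exists (seqof (toggle y A) :: s); split.
  split; first exact: (good_mono gA).
  split => //; [exact: (good_mono gA')|exact: seqof_step].
move: sz; rewrite /= /y !in_toggle eqxx xpair_eqE /=.
move: sA sB; case: ((false, o1) \in A); case: ((true, o1) \in A);
  case: ((false, o1) \in B); case: ((true, o1) \in B) => //= _ _; lia.
Qed.

Lemma upper sA tB A B : good sA A -> good tB B ->
  exists s, flip_walk a (seqof A) s (seqof B) /\ (size s <= 2 * k.+2)%N.
Proof.
move=> gA gB.
have z : forall (m : 'I_n), ~~ (0 < m)%N -> m = ord0.
  by move=> m; rewrite lt0n negbK => /eqP h; apply: val_inj.
case sA0: (0 < sA)%N; case tB0: (0 < tB)%N.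
- have [s [w sz]] := case_i gA gB sA0 tB0.
  by exists s; split => //; split => //; exact: (good_mono gA).
- move: gB; rewrite (z tB (negbT tB0)) => gB.
  have [s [w sz]] := case_ii gB gA sA0.
  have [s' [w' sz']] := walk_rev (conj (good_mono gB) w).
  by exists s'; rewrite sz'.
- move: gA; rewrite (z sA (negbT sA0)) => gA.
  have [s [w sz]] := case_ii gA gB tB0.
  by exists s; split => //; split => //; exact: (good_mono gA).
- move: gA gB; rewrite (z sA (negbT sA0)) (z tB (negbT tB0)) => gA gB.
  case e: (((true, ord0) \in A) == ((true, ord0) \in B)).
    have [s [w sz]] := case_iv gA gB (eqP e).
    by exists s; split => //; split => //; exact: (good_mono gA).
  by apply: case_v => //; rewrite e.
Qed.


Lemma ins_count (p q : seq V) (X : pred V) : insert1 p q ->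
  exists x, count X q = (count X p + X x)%N.
Proof.
case=> i [x ->]; exists x.
rewrite !count_cat /= -[in RHS](cat_take_drop i p) count_cat; by rewrite addnA addnAC.
Qed.

Lemma walk_count p s q (P N : pred V) : flip_walk_from a p s q ->
  (count P q + count N p <= size s + count P p + count N q)%N.
Proof.
elim: s p => [|p1 s IH] p /=; first by move=> ->; lia.
case=> _ adj w; have := IH _ w.
case: adj => [h|h].
  have [x ex] := ins_count P h; have [y ey] := ins_count N h.
  rewrite ex ey; case: (P x); case: (N y) => /=; lia.
have [x ex] := ins_count P h; have [y ey] := ins_count N h.
rewrite ex ey; case: (P x); case: (N y) => /=; lia.
Qed.

Definition Aneg : {set V} := [set x : V | ~~ x.1 || (x.2 == ord_max)].
Definition Apos : {set V} := [set x : V | x.1 || (x.2 == ord_max)].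
Definition Pp : pred V := fun x => x.1 && (x.2 != ord_max).
Definition Nn : pred V := fun x => ~~ x.1 && (x.2 != ord_max).

Lemma good_Aneg : good ord0 Aneg.
Proof. by split; rewrite ?in_set //= orbF. Qed.

Lemma good_Apos : good ord0 Apos.
Proof. by split; rewrite ?in_set //= orbF. Qed.

Lemma cnt_enum : count (fun i : 'I_n => i != ord_max) (enum 'I_n) = k.+2.
Proof.
have h := count_predC (pred1 ord_max) (enum 'I_n).
rewrite size_enum_ord (count_uniq_mem _ (enum_uniq _)) mem_enum in h.
have -> : count (fun i : 'I_n => i != ord_max) (enum 'I_n) =
  count (predC (pred1 ord_max)) (enum 'I_n) by [].
by move: h => /=; rewrite add1n => -[].
Qed.

Lemma lower_counts :
  [/\ count Pp (seqof Aneg) = 0%N, count Nn (seqof Apos) = 0%N,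
      count Pp (seqof Apos) = k.+2 & count Nn (seqof Aneg) = k.+2].
Proof.
rewrite /seqof !count_filter; split.
- apply/eqP; rewrite eqn0Ngt -has_count; apply/hasPn => -[c i] _.
  by rewrite /Pp /Nn /Aneg /Apos /= in_set /=; case: c => /=; case: (i == ord_max).
- apply/eqP; rewrite eqn0Ngt -has_count; apply/hasPn => -[c i] _.
  by rewrite /Pp /Nn /Aneg /Apos /= in_set /=; case: c => /=; case: (i == ord_max).
- rewrite (eq_count (a2 := Pp)); last first.
    by move=> [c i]; rewrite /Pp /Nn /Aneg /Apos /= in_set /=; case: c => /=; case: (i == ord_max).
  rewrite /L count_cat !count_map.
  rewrite (eq_count (a1 := preim _ _) (a2 := pred0)) // count_pred0 add0n.
  rewrite -enumT; rewrite -[RHS]cnt_enum; by apply: eq_count.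
- rewrite (eq_count (a2 := Nn)); last first.
    by move=> [c i]; rewrite /Pp /Nn /Aneg /Apos /= in_set /=; case: c => /=; case: (i == ord_max).
  rewrite /L count_cat !count_map.
  rewrite [X in (_ + X)%N](eq_count (a2 := pred0)) // count_pred0 addn0.
  by rewrite count_rev; exact: cnt_enum.
Qed.

End S.

Theorem theorem1p1 (R : realFieldType) (n : nat) (a : 'I_n -> R) :
  (3 <= n)%N ->
  (forall i, 0 < a i) ->
  (forall i j : 'I_n, (i < j)%N -> a i < a j) ->
  (forall p q, cp_mono_path a p -> cp_mono_path a q ->
     exists s, flip_walk a p s q /\ (size s <= 2 * (n - 1))%N) /\
  (exists p q, [/\ cp_mono_path a p, cp_mono_path a q &
     forall s, flip_walk a p s q -> (2 * (n - 1) <= size s)%N]).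
Proof.
case: n a => [|[|[|k]]] a // _ apos amono.
have e : (k.+3 - 1 = k.+2)%N by rewrite subn1.
rewrite e; split.
  move=> p q /(mono_good apos amono) [ep [m gp]] /(mono_good apos amono) [eq [m' gq]].
  rewrite ep eq; exact: (upper apos amono gp gq).
exists (seqof (Aneg k)), (seqof (Apos k)); split.
- exact: (good_mono apos amono (good_Aneg _)).
- exact: (good_mono apos amono (good_Apos _)).
- move=> s [_ w]; have := walk_count (@Pp k) (@Nn k) w.
  case: (lower_counts k) => -> -> -> ->; lia.
Qed.
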